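(* Let a preference profile with $n$ men and $n$ women be given. If some stable matching of this profile contains a hell-couple consisting of man $A$ and woman $Z$, then every stable matching of this profile matches $A$ with $Z$.
   Context: Each of $n$ men strictly ranks the $n$ women by a bijection to $\{1,\dots,n\}$ (1 = favorite, $n$ = least favorite), and each woman strictly ranks the $n$ men likewise. A matching is a perfect pairing of men with women. A matching is stable if there is no man $M$ and woman $W$, not matched to each other, such that each prefers the other to their assigned partner. A hell-pair is a man and a woman who rank each other $n$ (last); a hell-couple in a matching is a hell-pair who are matched to each other. *)

(* Defs.v *)
From mathcomp Require Import all_boot all_order all_fingroup.
Set Implicit Arguments. Unset Strict Implicit. Unset Printing Implicit Defensive.

(* A preference profile: each man m has a bijection (permutation) from women
   to 'I_n; his rank of woman w is  val (mpref m w) + 1  in {1..n}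
   (1 = favorite, n = least favorite). *)
Record profile (n : nat) := Profile {
  mpref : 'I_n -> {perm 'I_n};
  wpref : 'I_n -> {perm 'I_n}
}.

Definition mrank n (P : profile n) (m w : 'I_n) : nat := (val (mpref P m w)).+1.
Definition wrank n (P : profile n) (w m : 'I_n) : nat := (val (wpref P w m)).+1.

(* A matching is a perfect pairing: a bijection from men to women,
   mu m = the woman matched with man m. *)
Definition matching n := {perm 'I_n}.

Definition stable n (P : profile n) (mu : matching n) : Prop :=
  ~ exists (m w : 'I_n),
      [/\ mu m != w,
          mrank P m w < mrank P m (mu m)
        & wrank P w m < wrank P w ((mu^-1)%g w)].

Definition hell_pair n (P : profile n) (m w : 'I_n) : Prop :=
  mrank P m w = n /\ wrank P w m = n.

Definition hell_couple n (P : profile n) (mu : matching n) (m w : 'I_n) : Prop :=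
  hell_pair P m w /\ mu m = w.

(* Main.v *)
Require Import Defs.
From mathcomp Require Import all_boot all_order all_fingroup.

Lemma mrank_inj n (P : profile n) m w1 w2 : mrank P m w1 = mrank P m w2 -> w1 = w2.
Proof. by rewrite /mrank => -[] /val_inj /perm_inj. Qed.

Lemma wrank_inj n (P : profile n) w m1 m2 : wrank P w m1 = wrank P w m2 -> m1 = m2.
Proof. by rewrite /wrank => -[] /val_inj /perm_inj. Qed.

Lemma wrank_le n (P : profile n) w m : wrank P w m <= n.
Proof. exact: ltn_ord. Qed.

Lemma mrank_le n (P : profile n) w m : mrank P w m <= n.
Proof. exact: ltn_ord. Qed.

Theorem mainTheorem7 (n : nat) (P : profile n) (A Z : 'I_n) :
  (exists mu : matching n, stable P mu /\ hell_couple P mu A Z) ->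
  forall nu : matching n, stable P nu -> nu A = Z.
Proof.
move=> [mu [smu [[hA hZ] muA]]] nu snu.
apply/eqP; apply/negPn/negP => nAZ.
pose Mp := [set m | mrank P m (nu m) < mrank P m (mu m)].
pose Wm := [set w | wrank P w ((mu^-1)%g w) < wrank P w ((nu^-1)%g w)].
have L1 : forall m, m \in Mp -> nu m \in Wm.
  move=> m; rewrite !inE permK => H.
  have ne : mu m != nu m.
    by apply/eqP => E; rewrite E ltnn in H.
  have ne2 : (mu^-1)%g (nu m) != m.
    apply/eqP => E; have := congr1 mu E; rewrite permKV => E2; by rewrite E2 eqxx in ne.
  rewrite ltn_neqAle; apply/andP; split.
    by apply/eqP => /wrank_inj E; rewrite E eqxx in ne2.
  rewrite leqNgt; apply/negP => H2; apply: smu.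
  by exists m, (nu m); split.
have L2 : forall w, w \in Wm -> (mu^-1)%g w \in Mp.
  move=> w; rewrite !inE permKV => H.
  have ne : nu ((mu^-1)%g w) != w.
    apply/eqP => E; have E2 : (nu^-1)%g w = (mu^-1)%g w by rewrite -{1}E permK.
    by rewrite E2 ltnn in H.
  rewrite ltn_neqAle; apply/andP; split.
    by apply/eqP => /mrank_inj E; rewrite E eqxx in ne.
  rewrite leqNgt; apply/negP => H2; apply: snu.
  by exists ((mu^-1)%g w), w; split.
have c1 : #|Mp| <= #|Wm|.
  rewrite -(card_imset Mp (@perm_inj _ nu)); apply: subset_leq_card.
  by apply/subsetP => x /imsetP [m mM ->]; apply: L1.
have sub : Wm \subset mu @: Mp.
  apply/subsetP => w wW; apply/imsetP; exists ((mu^-1)%g w); first exact: L2.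
  by rewrite permKV.
have c2 : #|mu @: Mp| = #|Wm|.
  rewrite (card_imset Mp (@perm_inj _ mu)); apply/eqP; rewrite eqn_leq c1 /=.
  by rewrite -(card_imset Mp (@perm_inj _ mu)); apply: subset_leq_card.
have E : Wm = mu @: Mp by apply/eqP; rewrite eqEcard sub c2 leqnn.
have AM : A \in Mp.
  rewrite inE muA hA ltn_neqAle mrank_le andbT.
  apply/eqP => H; have H' : mrank P A (nu A) = mrank P A Z by rewrite H hA.
  move/mrank_inj: H' => H1.
  by rewrite H1 eqxx in nAZ.
have : Z \in Wm by rewrite E -muA; apply: imset_f.
have EA : (mu^-1)%g Z = A by rewrite -muA permK.
rewrite inE EA hZ => H.
by move: (@wrank_le n P Z ((nu^-1)%g Z)); rewrite leqNgt H.
Qed.
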